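(* Let $L$ be a finite, bounded, simple, relatively complemented lattice. Then every tolerance on $L$ is transitive (hence a congruence), the only tolerances on $L$ are $\mathrm{id}_L$ and $L^2$, and consequently $\mathsf{C}(L)=\mathsf{Pol}_{0,1}(L)$.
   Context: A tolerance on $L$ is a reflexive, symmetric binary relation $T$ such that $(a,b),(c,d)\in T$ imply $(a\vee c,b\vee d),(a\wedge c,b\wedge d)\in T$; a congruence is a transitive tolerance. $L$ is simple if its only congruences are $\mathrm{id}_L=\{(x,x):x\in L\}$ and $L^2$. $L$ is relatively complemented if for every $a\le b$ and every $x\in[a,b]$ there is $y\in[a,b]$ with $x\wedge y=a$, $x\vee y=b$. An $n$-ary aggregation function on $L$ ($n\ge1$) is a nondecreasing map $A:L^n\to L$ with $A(0,\dots,0)=0$, $A(1,\dots,1)=1$; $\mathsf{C}(L)$ is the set of all of them. Polynomials on $L$ are functions $L^n\to L$ built from projections and constants by finitely many pointwise joins and meets; $\mathsf{Pol}_{0,1}(L)$ is the set of polynomials preserving $0$ and $1$. *)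

(* Defs.v *)
From HB Require Import structures.
From mathcomp Require Import all_boot all_order.
Set Implicit Arguments. Unset Strict Implicit. Unset Printing Implicit Defensive.
Import Order.TTheory.
Local Open Scope order_scope.

Section LatticeDefs.
Context {disp : Order.disp_t} {L : finTBLatticeType disp}.

Definition tolerance (T : L -> L -> Prop) : Prop :=
  [/\ (forall x, T x x),
      (forall x y, T x y -> T y x) &
      (forall a b c d : L, T a b -> T c d -> T (a `|` c) (b `|` d) /\ T (a `&` c) (b `&` d))].

Definition transitive_rel (T : L -> L -> Prop) : Prop :=
  forall x y z, T x y -> T y z -> T x z.

Definition congruence (T : L -> L -> Prop) : Prop :=
  tolerance T /\ transitive_rel T.

Definition is_id_rel (T : L -> L -> Prop) : Prop := forall x y, T x y <-> x = y.
Definition is_full_rel (T : L -> L -> Prop) : Prop := forall x y, T x y.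

Definition simple_lattice : Prop :=
  forall T, congruence T -> is_id_rel T \/ is_full_rel T.

Definition rel_complemented : Prop :=
  forall a b x : L, a <= b -> a <= x -> x <= b ->
    exists y, [/\ a <= y, y <= b, x `&` y = a & x `|` y = b].

Definition aggregation (n : nat) (A : ('I_n -> L) -> L) : Prop :=
  [/\ (forall x y : 'I_n -> L, (forall i, x i <= y i) -> A x <= A y),
      A (fun _ => \bot) = \bot &
      A (fun _ => \top) = \top].

Inductive lterm (n : nat) : Type :=
  | LVar of 'I_n
  | LConst of L
  | LJoin of lterm n & lterm n
  | LMeet of lterm n & lterm n.

Fixpoint leval (n : nat) (t : lterm n) (x : 'I_n -> L) : L :=
  match t with
  | LVar i => x i
  | LConst c => c
  | LJoin t1 t2 => leval t1 x `|` leval t2 x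
  | LMeet t1 t2 => leval t1 x `&` leval t2 x
  end.

Definition polynomial (n : nat) (A : ('I_n -> L) -> L) : Prop :=
  exists t : lterm n, forall x, A x = leval t x.

Definition pol01 (n : nat) (A : ('I_n -> L) -> L) : Prop :=
  [/\ polynomial A, A (fun _ => \bot) = \bot & A (fun _ => \top) = \top].

End LatticeDefs.

(* Main.v *)
Require Import Defs.
From mathcomp Require Import all_boot all_order.
Set Implicit Arguments. Unset Strict Implicit.

Section Helpers.
Import Order.TTheory.
Local Open Scope order_scope.
Context {disp : Order.disp_t} {L : finTBLatticeType disp}.

Section Tol.
Variable T : L -> L -> Prop.
Hypothesis tolT : tolerance T.

Let refl x : T x x. Proof. by case: tolT. Qed.
Let sym x y : T x y -> T y x. Proof. by case: tolT => _ h _; apply: h. Qed.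
Let tJ a b c d : T a b -> T c d -> T (a `|` c) (b `|` d).
Proof. by case: tolT => _ _ h Hab Hcd; case: (h _ _ _ _ Hab Hcd). Qed.
Let tM a b c d : T a b -> T c d -> T (a `&` c) (b `&` d).
Proof. by case: tolT => _ _ h Hab Hcd; case: (h _ _ _ _ Hab Hcd). Qed.

Lemma tol_convex a b c d : T a b -> a <= c -> c <= d -> d <= b -> T c d.
Proof.
move=> Hab ac cd db.
have h1 := tJ Hab (refl c).
rewrite (join_r ac) (join_l (le_trans cd db)) in h1.
have h2 := tM h1 (refl d).
by rewrite (meet_l cd) (meet_r db) in h2.
Qed.

Hypothesis rc : @rel_complemented disp L.

Lemma tol_chain a b c : a <= b -> b <= c -> T a b -> T b c -> T a c.
Proof.
move=> ab bc Hab Hbc.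
have [d [ad dc bd bd']] := rc (le_trans ab bc) ab bc.
have h1 := tJ Hab (refl d).
rewrite (join_r ad) bd' in h1.
have h2 := tM h1 Hbc.
by rewrite meetC bd meetxx in h2.
Qed.

Lemma tol_trans : transitive_rel T.
Proof.
move=> x y z Hxy Hyz.
have h1 : T y (x `|` y) by have := sym (tJ Hxy (refl y)); rewrite joinxx.
have h2 : T y (z `|` y) by have := tJ (refl y) Hyz; rewrite joinxx joinC.
have h3 := tJ h1 h2; rewrite joinxx in h3.
have h4 : T (x `&` y) y by have := tM Hxy (refl y); rewrite meetxx.
have h5 : T (z `&` y) y by have := tM (sym Hyz) (refl y); rewrite meetxx.
have h6 := tM h4 h5; rewrite meetxx in h6.
have h7 := tol_chain (le_trans (leIl _ _) (leIr _ _)) (le_trans (leUr _ _) (leUl _ _)) h6 h3.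
have h8 : T (x `&` z) (x `|` z).
  apply: (tol_convex h7).
  - exact: leI2 (leIl _ _) (leIl _ _).
  - exact: le_trans (leIl _ _) (leUl _ _).
  - exact: leU2 (leUl _ _) (leUl _ _).
have h9 : T (x `&` z) z by apply: (tol_convex h8) => //; [exact: leIr|exact: leUr].
have h10 : T x (x `&` z) by apply: sym; apply: (tol_convex h8) => //; [exact: leIl|exact: leUl].
(* from T(m,M): T(m,z) meet.. use p(s,t) = (s & z) | (t & x) *)
have h11 := tM h8 (refl z); rewrite (meet_l (leIr _ _)) (meet_r (leUr _ _)) in h11.
have h12 := tM (sym h8) (refl x); rewrite (meet_r (leUl _ _)) (meet_l (leIl _ _)) in h12.
have h13 := tJ h12 h11.
by rewrite (join_l (leIl _ _)) (join_r (leIr _ _)) in h13.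
Qed.
End Tol.

Hypothesis rc : @rel_complemented disp L.
Hypothesis simp : @simple_lattice disp L.

Lemma tol_idfull (T : L -> L -> Prop) : tolerance T -> is_id_rel T \/ is_full_rel T.
Proof. by move=> tT; apply: simp; split => //; apply: tol_trans. Qed.

Fixpoint lsubst m n (t : @lterm disp L m) (s : 'I_m -> @lterm disp L n) : @lterm disp L n :=
  match t with
  | LVar i => s i
  | LConst c => LConst n c
  | LJoin t1 t2 => LJoin (lsubst t1 s) (lsubst t2 s)
  | LMeet t1 t2 => LMeet (lsubst t1 s) (lsubst t2 s)
  end.

Lemma leval_subst m n (t : @lterm disp L m) s x :
  leval (lsubst t s) x = leval t (fun j => leval (n:=n) (s j) x).
Proof. by elim: t => //= t1 -> t2 ->. Qed.

Lemma leval_ext n (t : @lterm disp L n) x y : (forall i, x i = y i) -> leval t x = leval t y.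
Proof. by move=> h; elim: t => //= t1 -> t2 ->. Qed.

Lemma leval_mono n (t : @lterm disp L n) x y : (forall i, x i <= y i) -> leval t x <= leval t y.
Proof. by move=> h; elim: t => //= t1 h1 t2 h2; [exact: leU2|exact: leI2]. Qed.

Definition pr (u v : L) : 'I_2 -> L := fun j => if j == ord0 then u else v.

Definition gtol (a b x y : L) : Prop :=
  exists p : @lterm disp L 2, x = leval p (pr a b) /\ y = leval p (pr b a).

Definition sw (j : 'I_2) : @lterm disp L 2 :=
  if j == ord0 then LVar ord_max else LVar ord0.

Lemma gtol_tol a b : tolerance (gtol a b).
Proof.
split.
- by move=> x; exists (LConst 2 x).
- move=> x y [p [-> ->]]; exists (lsubst p sw); rewrite !leval_subst.
  by split; apply: leval_ext => j; rewrite /sw /pr; case: (j == ord0).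
- move=> x y u v [p [-> ->]] [q [-> ->]]; split.
  + by exists (LJoin p q).
  + by exists (LMeet p q).
Qed.

Lemma sep a b : a <= b -> a != b ->
  exists p : @lterm disp L 2, leval p (pr a a) = \bot /\ leval p (pr b a) = \top.
Proof.
move=> ab nab.
case: (tol_idfull (gtol_tol a b)) => [hid|hfull].
  have : gtol a b a b by exists (LVar ord0).
  by move/hid => eab; rewrite eab eqxx in nab.
have [p [e0 e1]] := hfull \bot \top.
exists p; split; last by [].
apply/eqP; rewrite -lex0 e0; apply: leval_mono => j.
by rewrite /pr; case: (j == ord0).
Qed.

Section Poly.
Variable n : nat.
Implicit Types f g : ('I_n -> L) -> L.

Lemma polyC c : polynomial (fun _ : 'I_n -> L => c).
Proof. by exists (LConst n c). Qed.
Lemma polyU f g : polynomial f -> polynomial g -> polynomial (fun x => f x `|` g x).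
Proof. by move=> [t ht] [u hu]; exists (LJoin t u) => x /=; rewrite ht hu. Qed.
Lemma polyI f g : polynomial f -> polynomial g -> polynomial (fun x => f x `&` g x).
Proof. by move=> [t ht] [u hu]; exists (LMeet t u) => x /=; rewrite ht hu. Qed.
Lemma polyV i : polynomial (fun x : 'I_n -> L => x i).
Proof. by exists (LVar i). Qed.
Lemma poly_ext f g : (forall x, f x = g x) -> polynomial f -> polynomial g.
Proof. by move=> h [t ht]; exists t => x; rewrite -h. Qed.
Lemma poly2 (p : @lterm disp L 2) f g : polynomial f -> polynomial g ->
  polynomial (fun x => leval p (pr (f x) (g x))).
Proof.
move=> [t ht] [u hu]; exists (lsubst p (fun j => if j == ord0 then t else u)) => x.
rewrite leval_subst; apply: leval_ext => j; rewrite /pr.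
by case: (j == ord0).
Qed.

Lemma ind1 c i : exists f : (('I_n -> L) -> L), polynomial f /\ forall x,
  (c <= x i -> f x = \top) /\ (~~ (c <= x i) -> f x = \bot).
Proof.
suff H : forall S : seq L, all (fun t => ~~ (c <= t)) S -> exists f : (('I_n -> L) -> L), polynomial f /\
  forall x, (c <= x i -> f x = \top) /\ (x i \in S -> f x = \bot).
  have [f [pf hf]] := H _ (filter_all (fun t => ~~ (c <= t)) (enum L)).
  exists f; split => // x; have [h1 h2] := hf x; split => // nc.
  by apply: h2; rewrite mem_filter nc mem_enum.
elim => [|t S IH] /=.
  by move=> _; exists (fun _ => \top); split => //; exact: polyC.
case/andP => ct /IH [f [pf hf]].
have ab : c `&` t <= c by exact: leIl.
have nab : c `&` t != c by apply/eqP => /meet_idPl; apply/negP.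
have [p [p0 p1]] := sep ab nab.
exists (fun x => leval p (pr (x i `&` c) (c `&` t)) `&` f x); split.
  by apply: polyI => //; apply: poly2; [apply: polyI; [exact: polyV|exact: polyC]|exact: polyC].
move=> x; have [h1 h2] := hf x; split.
  by move=> cx; rewrite (meet_r cx) p1 h1 // meetxx.
rewrite in_cons => /orP [/eqP ->|xs]; last by rewrite h2 // meetx0.
suff -> : leval p (pr (t `&` c) (c `&` t)) = \bot by rewrite meet0x.
by rewrite meetC p0.
Qed.

Lemma indv (a : 'I_n -> L) : exists f : (('I_n -> L) -> L), polynomial f /\ forall x,
  ((forall i, a i <= x i) -> f x = \top) /\ (~ (forall i, a i <= x i) -> f x = \bot).
Proof.
suff H : forall I : seq 'I_n, exists f : (('I_n -> L) -> L), polynomial f /\ forall x,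
  ((forall i, a i <= x i) -> f x = \top) /\ ((exists2 i, i \in I & ~~ (a i <= x i)) -> f x = \bot).
  have [f [pf hf]] := H (enum 'I_n).
  exists f; split => // x; have [h1 h2] := hf x; split => // nall; apply: h2.
  have : ~~ [forall i, a i <= x i] by apply/negP => /forallP.
  by case/forallPn => i hi; exists i; rewrite ?mem_enum.
elim => [|i I [f [pf hf]]].
  by exists (fun _ => \top); split; [exact: polyC|move=> x; split => // [[]]].
have [g [pg hg]] := ind1 (a i) i.
exists (fun x => g x `&` f x); split; first exact: polyI.
move=> x; have [h1 h2] := hf x; have [g1 g2] := hg x; split.
  by move=> al; rewrite g1 ?h1 // meetxx.
case=> j; rewrite in_cons => /orP [/eqP ->|jI] nj.
  by rewrite g2 // meet0x.
by rewrite h2 ?meetx0 //; exists j.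
Qed.

Lemma agg_poly (A : ('I_n -> L) -> L) : aggregation A -> polynomial A.
Proof.
case=> mono _ _.
suff H : forall S : seq {ffun 'I_n -> L}, exists h : (('I_n -> L) -> L), polynomial h /\ forall x, h x <= A x /\
  (forall a, a \in S -> (forall i, a i <= x i) -> A a <= h x).
  have [h [ph hh]] := H (enum {: {ffun 'I_n -> L}}).
  apply: (poly_ext _ ph) => x; apply/le_anti/andP; split; first by case: (hh x).
  have [_ h2] := hh x.
  apply: le_trans (h2 (finfun x) _ _); first by apply: mono => i; rewrite ffunE.
    by rewrite mem_enum.
  by move=> i; rewrite ffunE.
elim => [|a S [h [ph hh]]].
  by exists (fun _ => \bot); split; [exact: polyC|move=> x; split => //; exact: le0x].
have [g [pg hg]] := indv a.
exists (fun x => h x `|` (A a `&` g x)); split; first by apply: polyU => //; apply: polyI => //; exact: polyC.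
move=> x; have [h1 h2] := hh x; have [g1 g2] := hg x; split.
  rewrite leUx h1 /=.
  have [al|nal] := boolP [forall i, a i <= x i].
    by rewrite g1 ?meetx1; [apply: mono|]; move=> i; apply: (forallP al).
  by rewrite g2 ?meetx0 ?le0x // => al; move/negP: nal; apply; apply/forallP.
move=> a'; rewrite in_cons => /orP [/eqP ->|aS] al.
  by rewrite g1 // meetx1 leUr.
exact: le_trans (h2 _ aS al) (leUl _ _).
Qed.

Lemma poly_agg (A : ('I_n -> L) -> L) : pol01 A -> aggregation A.
Proof.
case=> [[t ht] h0 h1]; split => // x y xy.
by rewrite !ht; apply: leval_mono.
Qed.
End Poly.
End Helpers.

Theorem mainTheorem6 (disp : Order.disp_t) (L : finTBLatticeType disp) :
  @simple_lattice disp L -> @rel_complemented disp L ->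
  [/\ (forall T : L -> L -> Prop, tolerance T -> transitive_rel T),
      (forall T : L -> L -> Prop, tolerance T -> is_id_rel T \/ is_full_rel T) &
      (forall (n : nat) (A : ('I_n -> L) -> L), (0 < n)%N ->
         (aggregation A <-> pol01 A))].
Proof.
move=> simp rc; split.
- by move=> T tT; apply: tol_trans.
- by move=> T tT; apply: tol_idfull.
- move=> n A _; split; last exact: poly_agg.
  by move=> hA; case: (hA) => _ h0 h1; split => //; apply: agg_poly.
Qed.
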